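(* Let $r\ge1$ be an integer. There is a unique real sequence $b=(b_0,b_1,\dots)$ with $b_0=1$ such that the leading diagonal of the difference table of depth $r$ of $b$ equals $(1,b_0,b_1,b_2,\dots)$. This sequence is $b_n=a_{n+1}$, where $(a_n)$ is defined by $a_0=1$, $a_{n+1}=\sum_{k=0}^n\binom nk r^{n-k}a_k$. In particular, for $r=1$, $b=(1,2,5,15,52,\dots)$ is the sequence of Bell numbers $B_1,B_2,\dots$.
   Context: The difference table of depth 1 of a sequence $c=(c_0,c_1,\dots)$ is its ordinary difference table, with top row $c$ and each subsequent row the successive differences of the row above; its leading diagonal is $(\Delta^0c_0,\Delta^1c_0,\Delta^2c_0,\dots)$ where $\Delta^mc_0=\sum_{k=0}^m(-1)^{m-k}\binom mk c_k$. The difference table of depth $r+1$ of $c$ is the difference table of depth 1 of the leading diagonal of the depth-$r$ table of $c$; its leading diagonal is the depth-$(r+1)$ leading diagonal. The Bell numbers are defined by $B_0=1$, $B_{n+1}=\sum_{k=0}^n\binom nk B_k$. *)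

(* Defs.v *)
From mathcomp Require Import all_boot all_order all_algebra.
From mathcomp Require Import reals.
Set Implicit Arguments. Unset Strict Implicit. Unset Printing Implicit Defensive.
Import Order.TTheory GRing.Theory Num.Theory.
Local Open Scope ring_scope.

(* Leading diagonal of the (depth-1) difference table of c:
   m |-> Delta^m c_0 = sum_{k=0}^m (-1)^(m-k) C(m,k) c_k. *)
Definition lead_diag {R : pzRingType} (c : nat -> R) : nat -> R :=
  fun m => \sum_(k < m.+1) (-1) ^+ (m - k) * ('C(m, k))%:R * c k.

Definition lead_diag_depth {R : pzRingType} (r : nat) (c : nat -> R) : nat -> R :=
  iter r lead_diag c.

Definition shift1 {R : pzRingType} (b : nat -> R) : nat -> R :=
  fun n => if n is m.+1 then b m else 1.

(* Main.v *)
Require Import Defs.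
From mathcomp Require Import all_boot all_order all_algebra.
From mathcomp Require Import reals ring.
From Stdlib Require Import FunctionalExtensionality.
Import Order.TTheory GRing.Theory Num.Theory.
Local Open Scope ring_scope.

Local Open Scope nat_scope.
Lemma binMM m k i : i + k <= m ->
  'C(m, i + k) * 'C(i + k, k) = 'C(m, k) * 'C(m - k, i).
Proof.
move=> h.
have hk : k <= m by apply: leq_trans h; rewrite leq_addl.
have hi : i <= m - k by rewrite leq_subRL // addnC.
apply/eqP; rewrite -(eqn_pmul2r (fact_gt0 (m - (i + k)))) -(eqn_pmul2r (fact_gt0 i)) -(eqn_pmul2r (fact_gt0 k)).
have e1 := bin_fact h. have e2 := bin_fact (leq_addl i k).
have e3 := bin_fact hk. have e4 := bin_fact hi.
rewrite addnK in e2. rewrite -subnDA addnC in e4.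
move: e1 e2 e3 e4.
set A := 'C(m, i + k). set B := 'C(i+k,k). set F := (i+k)`!. set G := (m - (i+k))`!.
set K := k`!. set I := i`!. set M := m`!. set C1 := 'C(m,k). set C2 := 'C(m-k,i). set H := (m-k)`!.
move=> e1 e2 e3 e4. apply/eqP.
transitivity M.
  by rewrite -e1 -e2; ring.
by rewrite -e3 -e4; ring.
Qed.
Local Open Scope ring_scope.
Section S.
Variable R : comNzRingType.
Definition E (x : R) (c : nat -> R) : nat -> R :=
  fun m => \sum_(k < m.+1) ('C(m, k))%:R * x ^+ (m - k) * c k.

Lemma E_ext x c d : (forall n, c n = d n) -> forall n, E x c n = E x d n.
Proof. by move=> h n; apply: eq_bigr => k _; rewrite h. Qed.

Lemma lead_diagE (c : nat -> R) n : lead_diag c n = E (-1) c n.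
Proof. by apply: eq_bigr => k _; ring. Qed.

Lemma E0 c n : E 0 c n = c n.
Proof.
rewrite /E big_ord_recr /= subnn expr0 binn mulr1 mul1r big1 ?add0r //.
move=> [k hk] _ /=; rewrite expr0n subn_eq0 leqNgt hk /=; ring.
Qed.

Lemma Ecomp x y c m : E x (E y c) m = E (x + y) c m.
Proof.
rewrite /E.
transitivity (\sum_(j < m.+1) \sum_(k < m.+1) ('C(m, j))%:R * x ^+ (m - j) *
   (('C(j, k))%:R * y ^+ (j - k) * c k)).
  apply: eq_bigr => [[j hj]] _ /=.
  rewrite mulr_sumr.
  rewrite (big_ord_widen m.+1 (fun k => ('C(m, j))%:R * x ^+ (m - j) *
   (('C(j, k))%:R * y ^+ (j - k) * c k))) //.
  rewrite big_mkcond /=; apply: eq_bigr => k _; case: ifP => // /negbT.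
  by rewrite -leqNgt => hk; rewrite (bin_small hk) !(mul0r, mulr0).
rewrite exchange_big /=; apply: eq_bigr => [[k hk]] _ /=.
rewrite exprDn.
pose F j := ('C(m, j))%:R * x ^+ (m - j) * (('C(j, k))%:R * y ^+ (j - k) * c k).
rewrite -(big_mkord xpredT F).
rewrite (big_cat_nat (n:=k)) //=; last exact: ltnW.
rewrite big_nat_cond big1 ?add0r; last first.
  by move=> j /andP [/andP [_ hj] _]; rewrite /F (bin_small hj) !(mul0r, mulr0).
rewrite -{1}(add0n k) big_addn subSn // big_mkord mulr_sumr mulr_suml.
apply: eq_bigr => [[i hi]] _ /=.
have hik : (i + k <= m)%N by rewrite ltnS leq_subRL // addnC in hi.
have e := congr1 (fun n => n%:R : R) (@binMM m k i hik); rewrite /= !natrM in e.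
rewrite /F -mulr_natr addnK -subnDA [(k + i)%N]addnC.
transitivity (('C(m, i + k))%:R * ('C(i + k, k))%:R * (x ^+ (m - (i + k)) * y ^+ i * c k) : R).
  ring.
rewrite e; ring.
Qed.

Lemma depthE r c n : lead_diag_depth r c n = E (- (r%:R)) c n.
Proof.
elim: r n => [|r IH] n.
  by rewrite oppr0 E0.
rewrite /lead_diag_depth iterS -/(lead_diag_depth r c) lead_diagE.
rewrite (E_ext (-1) _ _ IH) Ecomp; congr E; rewrite -addn1 natrD; ring.
Qed.
End S.
Arguments E {R}. Arguments E_ext {R}. Arguments E0 {R}. Arguments Ecomp {R}. Arguments depthE {R}. Arguments lead_diagE {R}.

Theorem mainTheorem2 (R : realType) (r : nat) (hr : (1 <= r)%N)
  (a : nat -> R) (ha0 : a 0%N = 1)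
  (haS : forall n : nat,
     a n.+1 = \sum_(k < n.+1) ('C(n, k))%:R * (r%:R) ^+ (n - k) * a k) :
  let P := fun b : nat -> R =>
    b 0%N = 1 /\ (forall n : nat, lead_diag_depth r b n = shift1 b n) in
  (exists! b : nat -> R, P b) /\
  (forall b : nat -> R, P b -> forall n : nat, b n = a n.+1) /\
  (r = 1%N -> forall B : nat -> R, B 0%N = 1 ->
     (forall n : nat, B n.+1 = \sum_(k < n.+1) ('C(n, k))%:R * B k) ->
     forall b : nat -> R, P b -> forall n : nat, b n = B n.+1).
Proof.
move=> P.
have key : forall b, P b -> forall n, b n = a n.+1.
  move=> b [hb0 hb] n.
  have hb' : forall m, b m = E (r%:R) (shift1 b) m.
    move=> m; rewrite -(E0 b m) -(subrr (r%:R : R)) -Ecomp.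
    apply: E_ext => j; by rewrite -hb depthE.
  elim/ltn_ind: n => n IHn.
  rewrite hb' haS; apply: eq_bigr => [[k hk]] _ /=; congr (_ * _).
  case: k hk => [|j] hj /=; first by rewrite ha0.
  by rewrite IHn.
have hP : P (fun n => a n.+1).
  split; first by rewrite haS big_ord1 bin0 subnn expr0 ha0 !mul1r.
  move=> n; rewrite depthE.
  rewrite (E_ext _ _ (E (r%:R) a) haS) Ecomp addNr E0.
  by case: n.
split; [|split] => //.
  exists (fun n => a n.+1); split => // b Pb.
  by apply: functional_extensionality => n; rewrite (key b Pb).
move=> r1 B hB0 hBS b Pb n.
rewrite (key b Pb).
have -> : forall m, a m = B m.
  move=> m; elim/ltn_ind: m => m IHm.
  case: m IHm => [|m] IHm; first by rewrite ha0 hB0.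
  rewrite haS hBS; apply: eq_bigr => [[k hk]] _ /=.
  by rewrite r1 expr1n mulr1 IHm.
by [].
Qed.
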